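(* Let $h_1,h_2:(0,\infty)\to\mathbb{R}$ be convex, bounded and decreasing, with $\lim_{x\to0}h_1(x)=\lim_{x\to0}h_2(x)$. Then every connected component $I\ne(0,\infty)$ of $X(h_1,h_2)$ satisfies $I\cap\operatorname{supp}(h_1)\ne\varnothing$, and every connected component $I\ne(0,\infty)$ of $X(h_2,h_1)$ satisfies $I\cap\operatorname{supp}(h_2)\ne\varnothing$.
   Context: $X(h_1,h_2):=\{x>0:h_1(x)<h_2(x)\}$ (an open subset of $(0,\infty)$). $\operatorname{supp}(h):=\{x>0:\text{for every open }U\ni x,\ h|_U\text{ is not affine}\}$. *)

(* Defs.v *)
From HB Require Import structures.
From mathcomp Require Import all_boot all_order all_algebra.
From mathcomp Require Import all_classical all_reals all_analysis.
Set Implicit Arguments. Unset Strict Implicit. Unset Printing Implicit Defensive.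
Import Order.TTheory GRing.Theory Num.Theory.
Import numFieldNormedType.Exports.
Local Open Scope classical_set_scope.
Local Open Scope ring_scope.

Section Defs.
Variable R : realType.

Definition posR : set R := [set x | 0 < x].

Definition convex_pos (h : R -> R) : Prop :=
  forall x y t : R, 0 < x -> 0 < y -> 0 <= t <= 1 ->
    h (t * x + (1 - t) * y) <= t * h x + (1 - t) * h y.

Definition bounded_pos (h : R -> R) : Prop :=
  exists M : R, forall x, 0 < x -> `|h x| <= M.

Definition decreasing_pos (h : R -> R) : Prop :=
  forall x y, 0 < x -> x <= y -> h y <= h x.

Definition Xset (h1 h2 : R -> R) : set R := [set x | 0 < x /\ h1 x < h2 x].

Definition affine_on (h : R -> R) (U : set R) : Prop :=
  exists a b : R, forall y, U y -> 0 < y -> h y = a * y + b.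

Definition supp (h : R -> R) : set R :=
  [set x | 0 < x /\ forall U : set R, open U -> U x -> ~ affine_on h U].

Definition is_component (A I : set R) : Prop :=
  exists x, A x /\ I = connected_component A x.

End Defs.

(* Main.v *)
Require Import Defs.
From HB Require Import structures.
From mathcomp Require Import all_boot all_order all_algebra.
From mathcomp Require Import all_classical all_reals all_analysis.
From mathcomp Require Import ring lra.
Import Order.TTheory GRing.Theory Num.Theory.
Import numFieldNormedType.Exports.
Local Open Scope classical_set_scope.
Local Open Scope ring_scope.
Set Implicit Arguments. Unset Strict Implicit. Unset Printing Implicit Defensive.

Lemma chord (R : realType) (h : R -> R) (u v w : R) : convex_pos h ->
  0 < u -> u < v -> v < w -> (w - u) * h v <= (w - v) * h u + (v - u) * h w.
Proof.
move=> hc u0 uv vw.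
have wu : 0 < w - u by lra.
pose t := (w - v) / (w - u).
have t0 : 0 <= t by rewrite /t divr_ge0 //; lra.
have t1 : t <= 1 by rewrite /t ler_pdivrMr //; lra.
have w0 : 0 < w by lra.
have := hc u w t u0 w0 (introT andP (conj t0 t1)).
have -> : t * u + (1 - t) * w = v by rewrite /t; field; lra.
move=> H.
have E : (w - v) * h u + (v - u) * h w = (w - u) * (t * h u + (1 - t) * h w).
  by rewrite /t; field; lra.
by rewrite E ler_pM2l.
Qed.
Lemma open_ball (R : realType) (W : set R) (y : R) : open W -> W y ->
  exists2 e, 0 < e & forall z, `|z - y| < e -> W z.
Proof.
move=> oW Wy; have := oW y Wy; rewrite /= nbhs_ballP => -[e e0 He].
exists e => // z Hz; apply: He; rewrite /ball /= distrC //.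
Qed.

Lemma two_lines (R : realType) (h : R -> R) (U V : set R) y a b c d :
  open U -> open V -> U y -> V y -> 0 < y ->
  (forall z, U z -> 0 < z -> h z = a * z + b) ->
  (forall z, V z -> 0 < z -> h z = c * z + d) -> a = c /\ b = d.
Proof.
move=> oU oV Uy Vy y0 HU HV.
have [e e0 He] := open_ball (openI oU oV) (conj Uy Vy).
pose z := y + e / 2.
have z0 : 0 < z by rewrite /z; lra.
have [Uz Vz] : (U `&` V) z.
  by apply: He; rewrite /z addrAC subrr add0r ger0_norm; lra.
have E1 := HU y Uy y0; rewrite (HV y Vy y0) in E1.
have E2 := HU z Uz z0; rewrite (HV z Vz z0) in E2.
have ac : a = c.
  have : (a - c) * (e / 2) = 0 by rewrite /z in E2; lra.
  move/eqP; rewrite mulf_eq0 => /orP[/eqP|/eqP]; lra.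
split => //; rewrite ac in E1; lra.
Qed.

Lemma loc_glob (R : realType) (h : R -> R) (I : set R) (x0 : R) :
  connected I -> I x0 -> (forall y, I y -> 0 < y) ->
  (forall y, I y -> exists U, open U /\ U y /\ affine_on h U) ->
  exists a b, forall y, I y -> h y = a * y + b.
Proof.
move=> cI Ix0 pos loc.
have [U0 [oU0 [U0x [a [b Hab]]]]] := loc x0 Ix0.
exists a, b.
pose B := [set y | I y /\ exists U, open U /\ U y /\
                    forall z, U z -> 0 < z -> h z = a * z + b].
suff BI : B = I.
  by move=> y; rewrite -BI => -[Iy [U [_ [Uy HU]]]]; apply: HU => //; apply: pos.
apply: cI.
- by exists x0; split => //; exists U0.
- exists (\bigcup_(U in [set U : set R | open U /\ forall z : R, U z -> 0 < z -> h z = a * z + b]) U).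
    by apply: bigcup_open => U [].
  apply/seteqP; split => y.
  + by move=> [Iy [U [oU [Uy HU]]]]; split => //; exists U.
  + by move=> [Iy [U [oU HU] Uy]]; split => //; exists U.
- exists (~` \bigcup_(V in [set V : set R | open V /\ exists c d : R, (c, d) <> (a, b) /\
        forall z : R, V z -> 0 < z -> h z = c * z + d]) V).
    by apply: open_closedC; apply: bigcup_open => V [].
  apply/seteqP; split => y.
  + move=> [Iy [U [oU [Uy HU]]]]; split => //.
    move=> [V [oV [c [d [neq HV]]]] Vy].
    have [ac bd] := two_lines oU oV Uy Vy (pos y Iy) HU HV.
    by apply: neq; rewrite ac bd.
  + move=> [Iy nC]; split => //.
    have [U [oU [Uy [c [d HU]]]]] := loc y Iy.
    case: (pselect ((c, d) = (a, b))) => E.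
      by case: E HU => -> -> HU; exists U.
    by exfalso; apply: nC; exists U => //; split => //; exists c, d.
Qed.
Lemma X_open_at (R : realType) (h1 h2 : R -> R) (y : R) (U : set R) (c d : R) :
  convex_pos h2 -> decreasing_pos h2 -> open U -> U y ->
  (forall z, U z -> 0 < z -> h1 z = c * z + d) -> Xset h1 h2 y ->
  exists2 del, 0 < del & forall z, `|z - y| < del -> Xset h1 h2 z.
Proof.
move=> cv dc oU Uy HU [y0 lt].
pose g := h2 y - h1 y.
have g0 : 0 < g by rewrite /g; lra.
have [e e0 He] := open_ball oU Uy.
pose D := h2 (y / 2) - h2 y.
have D0 : 0 <= D by rewrite /D subr_ge0; apply: dc; lra.
pose d3 := g / (2 * (`|c| + 1)).
pose d4 := g * y / (4 * (D + 1)).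
have d30 : 0 < d3 by rewrite /d3 divr_gt0 //; have := normr_ge0 c; lra.
have d40 : 0 < d4 by rewrite /d4 divr_gt0 //; [exact: mulr_gt0|lra].
have d3E : d3 * (2 * (`|c| + 1)) = g by rewrite /d3 mulfVK //; have := normr_ge0 c; lra.
have d4E : d4 * (4 * (D + 1)) = g * y by rewrite /d4 mulfVK //; lra.
exists (Num.min (Num.min e (y / 2)) (Num.min d3 d4)).
  by rewrite !lt_min e0 d30 d40 /=; lra.
move=> z; rewrite !lt_min => /andP[/andP[ze zy2] /andP[zd3 zd4]].
move: (zy2) (zd3) (zd4); rewrite !ltr_norml => /andP[z1 z2] /andP[z3 z4] /andP[z5 z6].
have z0 : 0 < z by lra.
split => //.
have h1z := HU z (He z ze) z0.
have h1y := HU y Uy y0.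
have cb : c * (z - y) < g / 2.
  have c1 : c * (z - y) <= `|c| * `|z - y| by rewrite -normrM ler_norm.
  have c2 : `|c| * `|z - y| <= `|c| * d3.
    by apply: ler_wpM2l => //; apply: ltW.
  have := normr_ge0 c; nra.
have [zley|ylez] := leP z y.
  have : h2 y <= h2 z by apply: dc.
  rewrite /g in g0 cb *; lra.
have y20 : 0 < y / 2 by lra.
have y2y : y / 2 < y by lra.
have := chord cv y20 y2y ylez.
rewrite /D in D0 d4E.
move=> H.
have H2 : (z - y) * (h2 (y / 2) - h2 y) <= (z - y) * (h2 (y / 2) - h2 y + 1).
  by apply: ler_wpM2l; lra.
have H3 : (z - y) * (h2 (y / 2) - h2 y + 1) < d4 * (h2 (y / 2) - h2 y + 1).
  by rewrite ltr_pM2r; lra.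
rewrite /g in g0 cb d4E; nra.
Qed.
Lemma limit_pt (R : realType) (h1 h2 : R -> R) (l g x0 : R) :
  h1 x @[x --> 0^'+] --> l -> h2 x @[x --> 0^'+] --> l -> 0 < g -> 0 < x0 ->
  exists t, (0 < t /\ t < x0) /\ h2 t - h1 t < g.
Proof.
move=> L1 L2 g0 x00.
have g2 : 0 < g / 2 by lra.
have A := cvgr_dist_lt _ _ L1 _ g2.
have B := cvgr_dist_lt _ _ L2 _ g2.
have : \forall t \near (0:R)^'+,
    `|l - h1 t| < g / 2 /\ `|l - h2 t| < g / 2 /\ 0 < t /\ t < x0.
  apply/near_andP; split; first exact: A.
  apply/near_andP; split; first exact: B.
  apply/near_andP; split; first exact: nbhs_right_gt.
  exact: nbhs_right_lt.
move=> H; have [t [H1 [H2 [t0 tx]]]] := @filter_ex R _ (at_right_proper_filter (0:R)) _ H.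
exists t; split => //.
move: H1 H2; rewrite !ltr_norml => /andP[a1 a2] /andP[b1 b2]; lra.
Qed.
Lemma arith1 (R : realType) (al y a b h1a h1h K eps : R) : 0 < al -> al < y ->
  a * al + b < h1a ->
  (y - al / 2) * h1a <= (y - al) * h1h + (al - al / 2) * (a * y + b) ->
  (y - al) * (h1h - a * (al / 2) - b) <= (y - al) * (K - 1) ->
  (y - al) * K < eps * K -> eps * K = al / 2 * (h1a - (a * al + b)) -> False.
Proof. move=> *; nra. Qed.

Lemma arith_b (R : realType) (a b be y eps h1b : R) : a <= 0 ->
  a * be + b < h1b -> h1b <= a * y + b -> be - eps < y ->
  (- a) * (be - y) <= (- a) * eps -> eps * (1 - a) = h1b - (a * be + b) -> False.
Proof. move=> *; nra. Qed.
Lemma arith2 (R : realType) (a b al x0 be h2a h2b h1x h2x : R) :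
  al < x0 -> x0 < be -> h2a <= a * al + b -> h2b <= a * be + b ->
  h1x = a * x0 + b -> h1x < h2x ->
  (be - al) * h2x <= (be - x0) * h2a + (x0 - al) * h2b -> False.
Proof. move=> *; nra. Qed.
Lemma arith3 (R : realType) (a b t x0 be h2t h1t h2b h1x h2x : R) :
  0 < t -> t < x0 -> x0 < be -> h2b <= a * be + b ->
  h1t = a * t + b -> h1x = a * x0 + b -> h1x < h2x -> h2t - h1t < h2x - h1x ->
  (be - t) * h2x <= (be - x0) * h2t + (x0 - t) * h2b -> False.
Proof. move=> *; nra. Qed.
Lemma arith4 (R : realType) (a b x0 M c : R) : a < 0 -> 0 < x0 ->
  (- a) * c = M + `|b| + 1 -> - M <= a * (x0 + c) + b -> False.
Proof. move=> *; have := ler_norm b; nra. Qed.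

Lemma main_half (R : realType) (h1 h2 : R -> R) :
  convex_pos h1 -> convex_pos h2 -> bounded_pos h1 ->
  decreasing_pos h1 -> decreasing_pos h2 ->
  (exists l : R, h1 x @[x --> 0^'+] --> l /\ h2 x @[x --> 0^'+] --> l) ->
  forall I : set R, is_component (Xset h1 h2) I -> I <> @posR R ->
     exists x, I x /\ supp h1 x.
Proof.
move=> cv1 cv2 [M HM] dc1 dc2 [l [L1 L2]] I [x0 [Xx0 IE]] neq.
case: (pselect (exists x, I x /\ supp h1 x)) => // Hn; exfalso.
have IX : I `<=` Xset h1 h2 by rewrite IE; exact: connected_component_sub.
have Ipos : forall y, I y -> 0 < y by move=> y /IX [].
have Ix0 : I x0 by rewrite IE; exact: connected_component_refl.
have x00 := Ipos x0 Ix0.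
have cI : connected I by rewrite IE; exact: component_connected.
have Iint : is_interval I by apply/connected_intervalP.
have loc : forall y, I y -> exists U, open U /\ U y /\ affine_on h1 U.
  move=> y Iy; apply: contrapT => H; apply: Hn; exists y; split => //.
  split; first exact: Ipos.
  by move=> U oU Uy aff; apply: H; exists U.
have [a [b Hab]] := loc_glob cI Ix0 Ipos loc.
have Jsub : forall J : set R, J x0 -> J `<=` Xset h1 h2 -> is_interval J -> J `<=` I.
  move=> J Jx JX Ji; rewrite IE; apply: connected_component_max => //.
  exact/connected_intervalP.
have Iopen : forall y, I y -> exists2 del, 0 < del & forall z, `|z - y| < del -> I z.
  move=> y Iy.
  have [U [oU [Uy [c [d HU]]]]] := loc y Iy.
  have [del del0 Hd] := X_open_at cv2 dc2 oU Uy HU (IX y Iy).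
  exists del => // z zy.
  have E := @same_connected_component _ (Xset h1 h2) x0 y; rewrite -IE in E.
  rewrite (E Iy).
  apply: (@connected_component_max _ (Xset h1 h2) [set w | `|w - y| < del] y) => //=.
  all: try by rewrite subrr normr0.
  all: try by move=> w; apply: Hd.
  apply/connected_intervalP => w1 w2 /= H1 H2 w /andP[l1 l2].
    move: H1 H2; rewrite !ltr_norml => /andP[? ?] /andP[? ?]; apply/andP; split; lra.
have a0 : a <= 0.
  have [del del0 Hd] := Iopen x0 Ix0.
  have Iz : I (x0 + del / 2).
    by apply: Hd; rewrite addrAC subrr add0r ger0_norm; lra.
  have le : x0 <= x0 + del / 2 by lra.
  have := dc1 _ _ x00 le; rewrite (Hab _ Iz) (Hab _ Ix0) => H; nra.
pose al := inf I.
have hinf : has_inf I.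
  by split; [exists x0 | exists 0 => y Iy; apply/ltW/Ipos].
have al0 : 0 <= al.
  by apply: lb_le_inf; [exists x0 | move=> y Iy; apply/ltW/Ipos].
have alI : forall y, I y -> al <= y by move=> y Iy; exact: (ge_inf hinf.2 Iy).
have Iabove : forall z, al < z -> z <= x0 -> I z.
  move=> z az zx; have e0 : 0 < z - al by lra.
  have [y Iy yz] := inf_adherent e0 hinf; rewrite -/al in yz.
  apply: (Iint y x0) => //; apply/andP; split; lra.
have alfacts : 0 < al -> ~ Xset h1 h2 al /\ h1 al <= a * al + b.
  move=> alp.
  have nIa : ~ I al.
    move=> Ia; have [del del0 Hd] := Iopen al Ia.
    have : I (al - del / 2).
      by apply: Hd; rewrite addrAC subrr add0r normrN ger0_norm; lra.
    move=> /alI; lra.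
  have nXa : ~ Xset h1 h2 al.
    move=> Xa; apply: nIa; apply: (Jsub [set w | al <= w <= x0]) => /=.
    - by apply/andP; split => //; apply: alI.
    - move=> w /andP[aw wx]; move: aw; rewrite le_eqVlt => /orP[/eqP <- //|aw].
      by apply: IX; apply: Iabove.
    - move=> w1 w2 /andP[? ?] /andP[? ?] w /andP[? ?]; apply/andP; split; lra.
    - by apply/andP; split => //; apply: alI.
  split => //.
  rewrite leNgt; apply/negP => H.
  pose d := h1 al - (a * al + b).
  have d0 : 0 < d by rewrite /d; lra.
  pose K := `|h1 (al / 2) - a * (al / 2) - b| + 1.
  have K0 : 0 < K by rewrite /K; have := normr_ge0 (h1 (al / 2) - a * (al / 2) - b); lra.
  pose eps := (al / 2) * d / K.
  have eps0 : 0 < eps by rewrite /eps divr_gt0 // mulr_gt0 //; lra.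
  have epsK : eps * K = (al / 2) * d by rewrite /eps divfK // gt_eqF.
  have [y Iy ye] := inf_adherent eps0 hinf; rewrite -/al in ye.
  have ay : al < y by have := alI y Iy; rewrite le_eqVlt => /orP[/eqP E|//]; rewrite -E in Iy.
  have a20 : 0 < al / 2 by lra.
  have a2a : al / 2 < al by lra.
  have ch := chord cv1 a20 a2a ay.
  rewrite (Hab y Iy) in ch.
  have n1 : h1 (al / 2) - a * (al / 2) - b <= K - 1 by rewrite /K; rewrite addrK; exact: ler_norm.
  have n2 : (y - al) * (h1 (al / 2) - a * (al / 2) - b) <= (y - al) * (K - 1).
    by apply: ler_wpM2l => //; lra.
  have n3 : (y - al) * K < eps * K by rewrite ltr_pM2r //; lra.
  rewrite /d in epsK; exact: (arith1 alp ay H ch n2 n3 epsK).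
have nX : forall z, 0 < z -> ~ Xset h1 h2 z -> h2 z <= h1 z.
  by move=> z z0 nXz; rewrite leNgt; apply/negP => H; apply: nXz.
case: (pselect (has_ubound I)) => [ub | nub].
  pose be := sup I.
  have hsup : has_sup I by split; [exists x0|].
  have Ibe : forall y, I y -> y <= be by move=> y Iy; exact: sup_upper_bound hsup _ Iy.
  have xb := Ibe x0 Ix0.
  have Ibelow : forall z, x0 <= z -> z < be -> I z.
    move=> z xz zb; have e0 : 0 < be - z by lra.
    have [y Iy yz] := sup_adherent e0 hsup; rewrite -/be in yz.
    apply: (Iint x0 y) => //; apply/andP; split; lra.
  have nIb : ~ I be.
    move=> Ib; have [del del0 Hd] := Iopen be Ib.
    have : I (be + del / 2).
      by apply: Hd; rewrite addrAC subrr add0r ger0_norm; lra.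
    move=> /Ibe; lra.
  have nXb : ~ Xset h1 h2 be.
    move=> Xb; apply: nIb; apply: (Jsub [set w | x0 <= w <= be]) => /=.
    - by apply/andP; split.
    - move=> w /andP[xw wb]; move: wb; rewrite le_eqVlt => /orP[/eqP -> //|wb].
      by apply: IX; apply: Ibelow.
    - move=> w1 w2 /andP[? ?] /andP[? ?] w /andP[? ?]; apply/andP; split; lra.
    - by apply/andP; split.
  have be0 : 0 < be by lra.
  have h1b : h1 be <= a * be + b.
    rewrite leNgt; apply/negP => H.
    pose eps := (h1 be - (a * be + b)) / (1 - a).
    have eps0 : 0 < eps by rewrite /eps divr_gt0 //; lra.
    have epsE : eps * (1 - a) = h1 be - (a * be + b) by rewrite /eps divfK // gt_eqF //; lra.
    have [y Iy ye] := sup_adherent eps0 hsup; rewrite -/be in ye.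
    have yb := Ibe y Iy.
    have H2 : h1 be <= a * y + b by rewrite -(Hab y Iy); apply: dc1 => //; apply: Ipos.
    have H3 : (- a) * (be - y) <= (- a) * eps by apply: ler_wpM2l; lra.
    exact: (arith_b a0 H H2 ye H3 epsE).
  have h2b : h2 be <= a * be + b by have := nX be be0 nXb; lra.
  have xlb : x0 < be by rewrite lt_neqAle xb andbT; apply/eqP => E; apply: nIb; rewrite -E.
  case: Xx0 => _ X0.
  move: al0; rewrite le_eqVlt => /orP[/eqP al0 | alp].
    have g0 : 0 < h2 x0 - h1 x0 by lra.
    have [t [[t0 tx] tg]] := limit_pt L1 L2 g0 x00.
    have It : I t by apply: Iabove; lra.
    have ch := chord cv2 t0 tx xlb.
    exact: (arith3 t0 tx xlb h2b (Hab t It) (Hab x0 Ix0) X0 tg ch).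
  have [nXa h1a] := alfacts alp.
  have h2a : h2 al <= a * al + b by have := nX al alp nXa; lra.
  have alx0 : al < x0.
    rewrite lt_neqAle (alI x0 Ix0) andbT; apply/eqP => E; apply: nXa; rewrite E; by split.
  have ch := chord cv2 alp alx0 xlb.
  exact: (arith2 alx0 xlb h2a h2b (Hab x0 Ix0) X0 ch).
have unb : forall m, exists w, I w /\ m < w.
  move=> m; apply: contrapT => H; apply: nub; exists m => w Iw.
  rewrite leNgt; apply/negP => mw; apply: H; by exists w.
have Iall : forall z, x0 <= z -> I z.
  move=> z xz; have [w [Iw zw]] := unb z.
  apply: (Iint x0 w) => //; apply/andP; split; lra.
have alp : 0 < al.
  rewrite lt_neqAle al0 andbT; apply/eqP => E; apply: neq.
  apply/seteqP; split => z; first exact: Ipos.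
  rewrite /posR /= => z0; case: (leP z x0) => zx.
    by apply: Iabove; lra.
  by apply: Iall; lra.
have aE : a = 0.
  apply/eqP; rewrite eq_le a0 /=; rewrite leNgt; apply/negP => an.
  pose c := (M + `|b| + 1) / (- a).
  have M0 : 0 <= M by have := HM x0 x00; have := normr_ge0 (h1 x0); lra.
  have cE : (- a) * c = M + `|b| + 1 by rewrite /c mulrC divfK // lt0r_neq0 //; lra.
  have c0 : 0 <= c by rewrite /c divr_ge0 //; have := normr_ge0 b; lra.
  have Iz : I (x0 + c) by apply: Iall; lra.
  have := HM _ (Ipos _ Iz); rewrite (Hab _ Iz) ler_norml => /andP[H _].
  exact: (arith4 an x00 cE H).
have [nXa h1a] := alfacts alp.
have h2a := nX al alp nXa.
have := dc2 al x0 alp (alI x0 Ix0).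
case: Xx0 => _; rewrite (Hab x0 Ix0); rewrite aE in h1a *; lra.
Qed.

Theorem proposition6p5 (R : realType) (h1 h2 : R -> R) :
  convex_pos h1 -> convex_pos h2 ->
  bounded_pos h1 -> bounded_pos h2 ->
  decreasing_pos h1 -> decreasing_pos h2 ->
  (exists l : R, h1 x @[x --> 0^'+] --> l /\ h2 x @[x --> 0^'+] --> l) ->
  (forall I : set R, is_component (Xset h1 h2) I -> I <> @posR R ->
     exists x, I x /\ supp h1 x) /\
  (forall I : set R, is_component (Xset h2 h1) I -> I <> @posR R ->
     exists x, I x /\ supp h2 x).
Proof.
move=> cv1 cv2 b1 b2 dc1 dc2 [l [L1 L2]]; split.
  by apply: main_half => //; exists l.
by apply: main_half => //; exists l.
Qed.
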